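(* Let $n,x$ be integers with $1<x<n$, so that $G=C_{2n}(x,1,n)$ is a $5$-regular circulant graph. If $n\equiv 0\pmod 3$, $x\equiv 1\pmod 3$ and $1<x\leq \tfrac{2n}{3}$, then $G$ is word-representable.
   Context: Two distinct letters $x,y$ alternate in a word $w$ if, after deleting all other letters from $w$, the resulting word is of the form $xyxy\cdots$ or $yxyx\cdots$ (of even or odd length). A graph $G=(V,E)$ is word-representable if there is a word $w$ over the alphabet $V$, containing every letter of $V$ at least once, such that for all distinct $x,y\in V$, $xy\in E$ if and only if $x$ and $y$ alternate in $w$. For an integer $m$ and a set $R$ of positive integers each at most $m/2$, the circulant graph $C_m(R)$ has vertex set $\{0,1,\dots,m-1\}$, with $i$ and $j$ adjacent iff $\min(|i-j|,\,m-|i-j|)\in R$. $C_{2n}(x,1,n)$ denotes the circulant graph on $2n$ vertices with jump set $\{1,x,n\}$; it is $5$-regular exactly when $1<x<n$. *)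

(* Defs.v *)
From mathcomp Require Import all_boot all_order.
Set Implicit Arguments. Unset Strict Implicit. Unset Printing Implicit Defensive.

Definition alternate (T : eqType) (w : seq T) (x y : T) : bool :=
  let u := [seq z <- w | (z == x) || (z == y)] in
  sorted (fun a b => a != b) u.

Definition word_representable (T : finType) (e : rel T) : Prop :=
  exists w : seq T,
    (forall v : T, v \in w) /\
    (forall x y : T, x != y -> (e x y <-> alternate w x y)).

Definition circ_dist (m i j : nat) : nat :=
  let d := if i <= j then j - i else i - j in minn d (m - d).

Definition circulant (m : nat) (R : pred nat) : rel 'I_m :=
  fun i j => circ_dist m i j \in R.
Arguments circulant m R : clear implicits.

Definition C2n_x1n (n x : nat) : rel 'I_(2 * n) :=
  circulant (2 * n) (fun d => [|| d == 1, d == x | d == n]).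
Arguments C2n_x1n n x : clear implicits.

(* Main.v *)
Require Import Defs.
From mathcomp Require Import all_boot all_order.
From mathcomp Require Import zify.
Set Implicit Arguments. Unset Strict Implicit. Unset Printing Implicit Defensive.

Lemma path_pieces (T : eqType) (a b : T) (f : nat -> seq T) (l : seq nat) :
  a != b -> (forall k, k \in l -> f k = [::] \/ f k = [:: b; a]) ->
  path (fun u v => u != v) a (flatten (map f l)) /\ last a (flatten (map f l)) = a.
Proof.
move=> ab; elim: l => [|k l IH] H //=.
have IH' : forall k, k \in l -> f k = [::] \/ f k = [:: b; a].
  by move=> k' hk; apply: H; rewrite inE hk orbT.
case: (H k (mem_head _ _)) => ->; first exact: IH IH'.
have [P L] := IH IH'.
by rewrite /= ab eq_sym ab P L.
Qed.

Lemma not_sorted_xx (T : eqType) (s1 s2 : seq T) (x : T) :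
  ~~ sorted (fun u v => u != v) (s1 ++ x :: x :: s2).
Proof.
case: s1 => [|h s1] /=; first by rewrite eqxx.
by rewrite cat_path /= eqxx /= !andbF.
Qed.

Section Gen.
Variable m : nat.
Variable e : rel 'I_m.
Hypothesis esym : forall u v, e u v = e v u.
Variable col : 'I_m -> nat.
Hypothesis col3 : forall v, col v < 3.
Hypothesis colP : forall u v, e u v -> col u != col v.

Definition pos (v : 'I_m) := col v * m + v.

Lemma pos_inj u v : pos u = pos v -> u = v.
Proof.
rewrite /pos => h; apply: val_inj => /=.
move: (col3 u) (col3 v) (ltn_ord u) (ltn_ord v) h.
case: (col u) => [|[|[|]]] //; case: (col v) => [|[|[|]]] //; lia.
Qed.

Lemma pos_lt v : pos v < 3 * m.
Proof.
rewrite /pos; move: (col3 v) (ltn_ord v); case: (col v) => [|[|[|]]] //; lia.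
Qed.

Lemma pos_mono u v : col u < col v -> pos u < pos v.
Proof.
rewrite /pos; move: (col3 u) (col3 v) (ltn_ord u) (ltn_ord v).
case: (col u) => [|[|[|]]] //; case: (col v) => [|[|[|]]] //; lia.
Qed.

Definition grp (z v : 'I_m) : nat :=
  if v == z then 6
  else if col v == col z then (if pos z < pos v then 0 else 5)
  else if col v == (col z).+1 %% 3 then (if e z v then 2 else 1)
  else (if e z v then 3 else 4).

Definition sel z k := [seq v <- enum 'I_m | grp z v == k].
Definition block z := sel z 0 ++ sel z 1 ++ z :: sel z 2 ++ sel z 3 ++ z :: sel z 4 ++ sel z 5.
Definition blk k := if [pick v | pos v == k] is Some v then block v else [::].
Definition W := flatten [seq blk k | k <- iota 0 (3*m)].

Lemma blk_pos v : blk (pos v) = block v.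
Proof.
rewrite /blk; case: pickP => [u /eqP/pos_inj -> //|/(_ v)]; by rewrite eqxx.
Qed.

Lemma blkP k : blk k = [::] \/ exists v, pos v = k /\ blk k = block v.
Proof.
rewrite /blk; case: pickP => [u /eqP hu|_]; [right; by exists u | by left].
Qed.

Lemma W_all v : v \in W.
Proof.
apply/flattenP; exists (blk (pos v)); first by apply: map_f; rewrite mem_iota pos_lt.
by rewrite blk_pos /block !mem_cat !inE eqxx !orbT.
Qed.


Lemma grp_lt6 z v : v != z -> grp z v < 6.
Proof. rewrite /grp => /negbTE ->; by repeat case: ifP. Qed.

Lemma grp_edge u v : u != v -> ((grp u v == 2) || (grp u v == 3)) = e u v.
Proof.
move=> uv; have vu : v != u by rewrite eq_sym.
rewrite /grp (negbTE vu).
case: ifP => [/eqP h|_].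
  case: (boolP (e u v)) => [/colP|]; first by rewrite h eqxx.
  by case: ifP.
by case: ifP => _; case: (e u v).
Qed.

Lemma ord_grp x y z : z != x -> z != y -> e x y -> pos x < pos y ->
  if (pos x < pos z) && (pos z < pos y) then grp z y < grp z x else grp z x < grp z y.
Proof.
move=> zx zy exy pxy.
have cxy : col x < col y.
  have := colP exy; rewrite neq_ltn => /orP [//|/pos_mono]; lia.
have h1 := @pos_mono z x; have h2 := @pos_mono x z; have h3 := @pos_mono z y; have h4 := @pos_mono y z.
have xz : x != z by rewrite eq_sym.
have yz : y != z by rewrite eq_sym.
have pzx : pos z != pos x by apply/eqP => /pos_inj /eqP; apply/negP.
have pzy : pos z != pos y by apply/eqP => /pos_inj /eqP; apply/negP.
rewrite /grp (negbTE xz) (negbTE yz).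
move: pzx pzy h1 h2 h3 h4 cxy pxy (col3 x) (col3 y) (col3 z).
case: (col x) => [|[|[|]]] //; case: (col y) => [|[|[|]]] //; case: (col z) => [|[|[|]]] //= ;
case: (e z x); case: (e z y);
case: (ltnP (pos z) (pos x)); case: (ltnP (pos z) (pos y)); case: (ltnP (pos x) (pos z)) => /=; lia.
Qed.

Section Pair.
Variables x y : 'I_m.
Hypothesis xy : x != y.
Let p := fun w : 'I_m => (w == x) || (w == y).

Lemma sel_filter z k : ~~ ((grp z x == k) && (grp z y == k)) ->
  [seq w <- sel z k | p w] =
  (if grp z x == k then [:: x] else [::]) ++ (if grp z y == k then [:: y] else [::]).
Proof.
rewrite /sel -filter_predI /p.
case hx: (grp z x == k); case hy: (grp z y == k) => //= _.
- rewrite -(filter_pred1_uniq (enum_uniq _) (mem_enum _ x)).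
  apply: eq_filter => w /=.
  case: (eqVneq w x) => [->|wx]; first by rewrite hx.
  case: (eqVneq w y) => [->|wy] //=; by rewrite hy.
- rewrite -(filter_pred1_uniq (enum_uniq _) (mem_enum _ y)).
  apply: eq_filter => w /=.
  case: (eqVneq w x) => [->|wx] /=; first by rewrite hx (negbTE xy).
  case: (eqVneq w y) => [->|wy] //=; by rewrite hy.
- rewrite -(filter_pred0 (enum 'I_m)).
  apply: eq_filter => w /=.
  case: (eqVneq w x) => [->|wx] /=; first by rewrite hx.
  case: (eqVneq w y) => [->|wy] //=; by rewrite hy.
Qed.


Lemma filt_other z : z != x -> z != y -> grp z x != grp z y ->
  [seq w <- block z | p w] = if grp z x < grp z y then [:: x; y] else [:: y; x].
Proof.
move=> zx zy gne.
have gx6 : grp z x < 6 by apply: grp_lt6; rewrite eq_sym.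
have gy6 : grp z y < 6 by apply: grp_lt6; rewrite eq_sym.
have pz : p z = false by rewrite /p (negbTE zx) (negbTE zy).
rewrite /block !filter_cat /= pz !filter_cat /= pz ?filter_cat.
rewrite !sel_filter; try (apply/negP => /andP [/eqP h1 /eqP h2]; move: gne; by rewrite h1 h2 eqxx).
move: gne gx6 gy6; case: (grp z x) => [|[|[|[|[|[|]]]]]] //; case: (grp z y) => [|[|[|[|[|[|]]]]]] //.
Qed.

Lemma filt_x_edge : e x y -> [seq w <- block x | p w] = [:: x; y; x].
Proof.
move=> exy.
have gxx : grp x x = 6 by rewrite /grp eqxx.
have gy6 : grp x y < 6 by apply: grp_lt6; rewrite eq_sym.
have := grp_edge xy; rewrite exy.
have px : p x by rewrite /p eqxx.
rewrite /block !filter_cat /= px !filter_cat /= px ?filter_cat.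
rewrite !sel_filter gxx //.
move: gy6; case: (grp x y) => [|[|[|[|[|[|]]]]]] //.
Qed.

Lemma filt_x_nonedge : ~~ e x y -> exists s1 s2, [seq w <- block x | p w] = s1 ++ x :: x :: s2.
Proof.
move=> exy.
have gxx : grp x x = 6 by rewrite /grp eqxx.
have gy6 : grp x y < 6 by apply: grp_lt6; rewrite eq_sym.
have := grp_edge xy; rewrite (negbTE exy).
have px : p x by rewrite /p eqxx.
rewrite /block !filter_cat /= px !filter_cat /= px ?filter_cat.
rewrite !sel_filter gxx //.
move: gy6; case: (grp x y) => [|[|[|[|[|[|]]]]]] // _ _.
- by exists [:: y], [::].
- by exists [:: y], [::].
- by exists [::], [:: y].
- by exists [::], [:: y].
Qed.

Lemma qW : [seq w <- W | p w] = flatten [seq [seq w <- blk k | p w] | k <- iota 0 (3 * m)].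
Proof. by rewrite /W filter_flatten -map_comp. Qed.

Lemma alt_nonedge : ~~ e x y -> ~~ alternate W x y.
Proof.
move=> nexy; rewrite /alternate -/p qW.
have hl := pos_lt x.
have -> : 3 * m = pos x + (1 + (3 * m - (pos x).+1)) by lia.
rewrite (iotaD 0 (pos x)) (iotaD (0 + pos x) 1) !map_cat !flatten_cat /= add0n blk_pos.
have [s1 [s2 ->]] := filt_x_nonedge nexy.
rewrite cats0.
have -> : forall A B : seq 'I_m, A ++ (s1 ++ x :: x :: s2) ++ B = (A ++ s1) ++ x :: x :: (s2 ++ B)
  by move=> A B; rewrite -!catA.
exact: not_sorted_xx.
Qed.

End Pair.

Lemma piece x y k : x != y -> e x y -> pos x < pos y -> k != pos x -> k != pos y ->
  [seq w <- blk k | (w == x) || (w == y)] = [::] \/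
  [seq w <- blk k | (w == x) || (w == y)] = if (pos x < k) && (k < pos y) then [:: y; x] else [:: x; y].
Proof.
move=> xy exy pxy kx ky.
case: (blkP k) => [->|[v [hv ->]]]; first by left.
right.
have vx : v != x by apply: contra kx => /eqP <-; rewrite hv.
have vy : v != y by apply: contra ky => /eqP <-; rewrite hv.
have := ord_grp vx vy exy pxy; rewrite hv => ho.
have gne : grp v x != grp v y.
  by move: ho; case: ifP => _ h; apply/eqP => e1; move: h; rewrite e1 ltnn.
rewrite (filt_other xy vx vy gne).
move: ho; case: ifP => _ h.
  by rewrite ltnNge (ltnW h).
by rewrite h.
Qed.

Lemma alt_edge x y : x != y -> e x y -> pos x < pos y -> alternate W x y.
Proof.
move=> xy exy pxy.
have yx : y != x by rewrite eq_sym.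
have eyx : e y x by rewrite esym.
rewrite /alternate qW.
have hl := pos_lt y.
have -> : 3 * m = pos x + (1 + ((pos y - (pos x).+1) + (1 + (3 * m - (pos y).+1)))) by lia.
rewrite (iotaD 0 (pos x)) add0n (iotaD (pos x) 1) (iotaD (pos x + 1) (pos y - (pos x).+1)).
have -> : pos x + 1 + (pos y - (pos x).+1) = pos y by lia.
rewrite (iotaD (pos y) 1) !map_cat !flatten_cat /= !blk_pos !cats0.
have fy : [seq w <- block y | (w == x) || (w == y)] = [:: y; x; y].
  rewrite -(filt_x_edge yx eyx); apply: eq_filter => w; by rewrite orbC.
rewrite fy (filt_x_edge xy exy).
have H1 : forall k, k \in (iota 0 (pos x)) -> [seq w <- blk k | (w == x) || (w == y)] = [::] \/ [seq w <- blk k | (w == x) || (w == y)] = [:: x; y].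
  move=> k; rewrite mem_iota => hk.
  have kx : k != pos x by apply/eqP => h; move: hk; rewrite h; lia.
  have ky : k != pos y by apply/eqP => h; move: hk; rewrite h; lia.
  case: (piece xy exy pxy kx ky) => ->; [by left | right].
  by have -> : (pos x < k) = false by lia.
have H2 : forall k, k \in (iota (pos x + 1) (pos y - (pos x).+1)) -> [seq w <- blk k | (w == x) || (w == y)] = [::] \/ [seq w <- blk k | (w == x) || (w == y)] = [:: y; x].
  move=> k; rewrite mem_iota => hk.
  have kx : k != pos x by apply/eqP => h; move: hk; rewrite h; lia.
  have ky : k != pos y by apply/eqP => h; move: hk; rewrite h; lia.
  case: (piece xy exy pxy kx ky) => ->; [by left | right].
  by have -> : (pos x < k) && (k < pos y) by apply/andP; split; lia.
have H3 : forall k, k \in (iota (pos y + 1) (3 * m - (pos y).+1)) -> [seq w <- blk k | (w == x) || (w == y)] = [::] \/ [seq w <- blk k | (w == x) || (w == y)] = [:: x; y].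
  move=> k; rewrite mem_iota => hk.
  have kx : k != pos x by apply/eqP => h; move: hk; rewrite h; lia.
  have ky : k != pos y by apply/eqP => h; move: hk; rewrite h; lia.
  case: (piece xy exy pxy kx ky) => ->; [by left | right].
  have -> : (k < pos y) = false by lia.
  by rewrite andbF.
have [P1 L1] := @path_pieces _ y x (fun k => [seq w <- blk k | (w == x) || (w == y)]) (iota 0 (pos x)) yx H1.
have [P2 L2] := @path_pieces _ x y (fun k => [seq w <- blk k | (w == x) || (w == y)]) (iota (pos x + 1) (pos y - (pos x).+1)) xy H2.
have [P3 L3] := @path_pieces _ y x (fun k => [seq w <- blk k | (w == x) || (w == y)]) (iota (pos y + 1) (3 * m - (pos y).+1)) yx H3.
apply: (@path_sorted _ _ y).
rewrite !cat_path P1 L1 /= P2 L2 P3 xy yx.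
done.
Qed.

Lemma alt_sym (w : seq 'I_m) x y : alternate w x y = alternate w y x.
Proof. rewrite /alternate. have -> : [seq z <- w | (z == x) || (z == y)] = [seq z <- w | (z == y) || (z == x)] by apply: eq_filter => z; rewrite orbC. by []. Qed.


Lemma gen_wr : word_representable e.
Proof.
exists W; split; first exact: W_all.
move=> x y xy; split.
- move=> exy; case: (ltngtP (pos x) (pos y)) => h.
  + exact: alt_edge.
  + rewrite alt_sym; apply: alt_edge.
    * by rewrite eq_sym.
    * by rewrite esym.
    * exact: h.
  + have hxy := pos_inj h. by move: xy; rewrite hxy eqxx.
- move=> alt; case: (boolP (e x y)) => [_|ne]; first by [].
  by move: (alt_nonedge xy ne); rewrite alt.
Qed.

End Gen.


Lemma circ_sym m i j : circ_dist m i j = circ_dist m j i.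
Proof. rewrite /circ_dist; case: (leqP i j); case: (leqP j i) => *; lia. Qed.

Definition colr (n : nat) (i : nat) : nat :=
  (i + (if i < 2 * (n %/ 3) then 0 else if i < 4 * (n %/ 3) then 1 else 2)) %% 3.

Lemma colr_proper n x (u v : 'I_(2 * n)) :
  1 < x -> x < n -> n %% 3 = 0 -> x %% 3 = 1 -> 3 * x <= 2 * n ->
  C2n_x1n n x u v -> colr n u != colr n v.
Proof.
move=> h1 h2 h3 h4 h5.
have hu := ltn_ord u; have hv := ltn_ord v.
rewrite /C2n_x1n /circulant /circ_dist unfold_in /=.
rewrite /colr.
case: (leqP (nat_of_ord u) v) => huv;
case: (ltnP (nat_of_ord u) (2 * (n %/ 3))) => a1; try case: (ltnP (nat_of_ord u) (4 * (n %/ 3))) => a2;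
case: (ltnP (nat_of_ord v) (2 * (n %/ 3))) => b1; try case: (ltnP (nat_of_ord v) (4 * (n %/ 3))) => b2;
move=> /or3P [/eqP h|/eqP h|/eqP h]; lia.
Qed.

Theorem corollary4 (n x : nat) :
  1 < x -> x < n ->
  n %% 3 = 0 -> x %% 3 = 1 -> 3 * x <= 2 * n ->
  word_representable (C2n_x1n n x).
Proof.
move=> h1 h2 h3 h4 h5.
apply: (@gen_wr (2 * n) (C2n_x1n n x) _ (fun v => colr n v)).
- by move=> u v; rewrite /C2n_x1n /circulant circ_sym.
- by move=> v; rewrite /colr ltn_pmod.
- by move=> u v; apply: colr_proper.
Qed.
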